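(* Let $A$ be a $C$-algebra. \begin{enumerate} \item Let $\mathcal{M}$ be the partially ordered set consisting of $A$-submodules of $A\otimes A$ of the form $\overline{A\otimes M}$ where $M$ runs through $C$-submodules of $A$. If $\mathcal{M}$ does not satisfy the ascending chain condition, then $\text{Ш}_C(A)$ of weight zero does not satisfy the ascending chain condition for Baxter ideals. \item If $A$ is not a noetherian ring, then $\text{Ш}_C(A)$ of any weight does not satisfy the ascending chain condition for Baxter ideals. \end{enumerate}
   Context: $C$ is a commutative ring, $\lambda\in C$. $\text{Ш}_C(A)=\bigoplus_{k\in\mathbb{N}}A^{\otimes(k+1)}$ is the shuffle (free) Baxter $C$-algebra of weight $\lambda$ on $A$: product $(x_0\otimes\cdots\otimes x_m)(y_0\otimes\cdots\otimes y_n)=x_0y_0\otimes(\text{sum of mixable shuffles of } x_1\cdots x_m \text{ and } y_1\cdots y_n)$, where in a mixable shuffle some adjacent pairs $x_i$ followed by $y_j$ are merged into $x_iy_j$ with a factor $\lambda$ per merger; Baxter operator $P_A(x_0\otimes\cdots\otimes x_n)=\mathbf{1}_A\otimes x_0\otimes\cdots\otimes x_n$. A Baxter ideal is an ideal $I$ with $P_A(I)\subseteq I$. $A\otimes A$ is an $A$-module via the left tensor factor, and for a $C$-submodule $M\subseteq A$, $\overline{A\otimes M}$ denotes the subgroup of $A\otimes A$ generated by $a\otimes b$, $a\in A$, $b\in M$ (the image of $A\otimes M\to A\otimes A$). *)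

(* Defs.v *)
From HB Require Import structures.
From mathcomp Require Import all_boot all_algebra.
From mathcomp Require Import finmap.
From mathcomp.multinomials Require Import monalg.

Set Implicit Arguments.
Unset Strict Implicit.
Unset Printing Implicit Defensive.

Import GRing.Theory.
Local Open Scope ring_scope.

Definition submod (R : nzRingType) (V : lmodType R) (S : V -> Prop) : Prop :=
  [/\ S 0, (forall x y, S x -> S y -> S (x + y)) & (forall (c : R) x, S x -> S (c *: x))].

Definition span (R : nzRingType) (V : lmodType R) (G : V -> Prop) : V -> Prop :=
  fun x => forall S : V -> Prop, submod S -> (forall y, G y -> S y) -> S x.

Definition ring_ideal (A : comNzRingType) (I : A -> Prop) : Prop :=
  [/\ I 0, (forall x y, I x -> I y -> I (x + y)) & (forall a x, I x -> I (a * x))].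

Definition acc (T : Type) (P : (T -> Prop) -> Prop) : Prop :=
  forall I : nat -> T -> Prop,
    (forall n, P (I n)) ->
    (forall n x, I n x -> I n.+1 x) ->
    exists n, forall m, (n <= m)%N -> I m = I n.

Definition noetherian (A : comNzRingType) : Prop := acc (@ring_ideal A).

(* Ш_C(A) = (+)_k A^{(x)(k+1)} is realised as the quotient F/N, where  *)
(* F is the free C-module on words (x0, [x1;...;xn]) (pure tensors     *)
(* x0 (x) x1 (x) ... (x) xn) and N is the C-span of the multilinearity *)
(* relations ([tensor_rel]).                                           *)

Section Shuffle.
Context (C : comNzRingType) (A : comAlgType C).

Definition tword := (A * seq A)%type.
Definition Fsh := {malg C[tword]}.

(* word with given list of letters (nonempty in use) *)
Definition wd (s : seq A) : tword := (head 0 s, behead s).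

Definition tensor_rel (f : Fsh) : Prop :=
  (exists (u v : seq A) (a b : A),
      f = << wd (u ++ (a + b) :: v) >> - << wd (u ++ a :: v) >> - << wd (u ++ b :: v) >>)
  \/ (exists (u v : seq A) (c : C) (a : A),
      f = << wd (u ++ (c *: a) :: v) >> - c *: << wd (u ++ a :: v) >>).

Variable lam : C.

(* Sum of mixable shuffles of xs and ys (weight lam), as a formal list
   of (coefficient, word); given by the standard (quasi-shuffle)
   recursion. *)
Fixpoint mshuffle (xs : seq A) : seq A -> seq (C * seq A) :=
  fix msh_in (ys : seq A) :=
  match xs, ys with
  | [::], _ => [:: (1, ys)]
  | _, [::] => [:: (1, xs)]
  | x :: xs', y :: ys' =>
      [seq (p.1, x :: p.2) | p <- mshuffle xs' ys] ++
      [seq (p.1, y :: p.2) | p <- msh_in ys'] ++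
      [seq (lam * p.1, (x * y) :: p.2) | p <- mshuffle xs' ys']
  end.

Definition wmul (u v : tword) : Fsh :=
  \sum_(p <- mshuffle u.2 v.2) p.1 *: << (u.1 * v.1, p.2) >>.

Definition shmul (f g : Fsh) : Fsh :=
  \sum_(u <- msupp f) \sum_(v <- msupp g) (f@_u * g@_v) *: wmul u v.

Definition shP (f : Fsh) : Fsh :=
  \sum_(u <- msupp f) f@_u *: << ((1 : A), u.1 :: u.2) >>.

(* Baxter ideals of Ш_C(A), represented by their preimages in F: the
   C-submodules of F containing N, stable under multiplication by
   arbitrary elements and under P.  (Ideals of F/N correspond bijectively
   and inclusion-preservingly to such subsets.) *)
Definition baxter_ideal (I : Fsh -> Prop) : Prop :=
  [/\ submod I,
      (forall f, tensor_rel f -> I f),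
      (forall f g, I f -> I (shmul f g) /\ I (shmul g f))
    & (forall f, I f -> I (shP f))].

End Shuffle.

(* A (x) A as quotient of the free C-module on pairs, and the          *)
(* submodules  \overline{A (x) M}  (represented by preimages).         *)

Section Tensor2.
Context (C : comNzRingType) (A : comAlgType C).

Definition Ft2 := {malg C[(A * A)%type]}.

Definition tensor2_rel (f : Ft2) : Prop :=
  (exists a a' b : A, f = << (a + a', b) >> - << (a, b) >> - << (a', b) >>)
  \/ (exists a b b' : A, f = << (a, b + b') >> - << (a, b) >> - << (a, b') >>)
  \/ (exists (c : C) (a b : A), f = << (c *: a, b) >> - c *: << (a, b) >>)
  \/ (exists (c : C) (a b : A), f = << (a, c *: b) >> - c *: << (a, b) >>).

(* preimage in Ft2 of the image of A (x) M -> A (x) A *)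
Definition tensorAM (M : A -> Prop) : Ft2 -> Prop :=
  span (fun f => tensor2_rel f \/ exists a b : A, M b /\ f = << (a, b) >>).

Definition calM (S : Ft2 -> Prop) : Prop :=
  exists M : A -> Prop, submod M /\ S = tensorAM M.

End Tensor2.

(* Main.v *)
Require Import Defs.
From HB Require Import structures.
From mathcomp Require Import all_boot all_algebra.
From mathcomp Require Import finmap.
From mathcomp.multinomials Require Import monalg.
From Stdlib Require Import FunctionalExtensionality PropExtensionality.
From Stdlib Require List.
Set Implicit Arguments. Unset Strict Implicit. Unset Printing Implicit Defensive.
Import GRing.Theory.
Local Open Scope ring_scope.
Section Gen.
Context (R : nzRingType) (V : lmodType R).
Implicit Types (S G : V -> Prop).

Lemma span_submod G : submod (Defs.span G).
Proof.
split.
- by move=> S [S0 _ _] _.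
- by move=> x y Hx Hy S HS HG; case: (HS) => _ HD _; apply: HD; [apply: Hx|apply: Hy].
- by move=> c x Hx S HS HG; case: (HS) => _ _ HZ; apply: HZ; apply: Hx.
Qed.

Lemma span_gen G x : G x -> Defs.span G x.
Proof. by move=> Gx S _ H; apply: H. Qed.

Lemma span_min G S : submod S -> (forall y, G y -> S y) -> forall x, Defs.span G x -> S x.
Proof. by move=> HS HG x Hx; apply: Hx. Qed.

Lemma submodN S x : submod S -> S x -> S (- x).
Proof. move=> [_ _ HZ] Hx; rewrite -scaleN1r; exact: HZ. Qed.

Lemma submodD S x y : submod S -> S x -> S y -> S (x + y).
Proof. by move=> [_ HD _]; apply: HD. Qed.

Lemma submodZ S c x : submod S -> S x -> S (c *: x).
Proof. by move=> [_ _ HZ]; apply: HZ. Qed.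

Lemma submod0 S : submod S -> S 0.
Proof. by case. Qed.

Lemma submodB S x y : submod S -> S x -> S y -> S (x - y).
Proof. by move=> HS Hx Hy; apply: submodD => //; apply: submodN. Qed.

Lemma submod_sum (I : Type) S (s : seq I) (F : I -> V) :
  submod S -> (forall i, List.In i s -> S (F i)) -> S (\sum_(i <- s) F i).
Proof.
move=> HS; elim: s => [|i s IH] H; first by rewrite big_nil; apply: submod0.
rewrite big_cons; apply: submodD => //; first by apply: H; left.
by apply: IH => j Hj; apply: H; right.
Qed.
End Gen.

Section Lin.
Context (C : comNzRingType) (K : choiceType) (V : lmodType C).
Definition lin (h : K -> V) (f : {malg C[K]}) : V := \sum_(u <- msupp f) f@_u *: h u.

Lemma linEw h f (d : {fset K}) : (msupp f `<=` d)%fset -> lin h f = \sum_(u <- d) f@_u *: h u.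
Proof.
move=> le; rewrite /lin [LHS](big_fset_incl _ le) => //= x xd /mcoeff_outdom ->.
by rewrite scale0r.
Qed.

Lemma linD h f g : lin h (f + g) = lin h f + lin h g.
Proof.
rewrite (@linEw h (f + g) (msupp f `|` msupp g)%fset) ?msuppD_le //.
rewrite (@linEw h f (msupp f `|` msupp g)%fset) ?fsubsetUl //.
rewrite (@linEw h g (msupp f `|` msupp g)%fset) ?fsubsetUr //.
by rewrite -big_split; apply: eq_bigr => u _; rewrite mcoeffD scalerDl.
Qed.

Lemma linZ h c f : lin h (c *: f) = c *: lin h f.
Proof.
rewrite (@linEw h (c *: f) (msupp f)) ?msuppZ_le // /lin scaler_sumr.
by apply: eq_bigr => u _; rewrite mcoeffZ scalerA.
Qed.

Lemma lin0 h : lin h 0 = 0.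
Proof. by rewrite /lin msupp0 big_nil. Qed.

Lemma linN h f : lin h (- f) = - lin h f.
Proof. by rewrite -[- f]scaleN1r linZ scaleN1r. Qed.

Lemma linB h f g : lin h (f - g) = lin h f - lin h g.
Proof. by rewrite linD linN. Qed.

Lemma linU h k : lin h << k >> = h k.
Proof. by rewrite (@linEw h _ _ msuppU_le) big_seq_fset1 mcoeffUU scale1r. Qed.

Lemma lin_sum h (I : Type) (s : seq I) (F : I -> {malg C[K]}) :
  lin h (\sum_(i <- s) F i) = \sum_(i <- s) lin h (F i).
Proof.
elim: s => [|i s IH]; first by rewrite !big_nil lin0.
by rewrite !big_cons linD IH.
Qed.

Lemma submod_lin (S : V -> Prop) h f : submod S -> (forall k, S (h k)) -> S (lin h f).
Proof. by move=> HS Hh; apply: submod_sum => // u _; apply: submodZ. Qed.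

Lemma submod_pre (S : V -> Prop) h : submod S -> submod (fun f => S (lin h f)).
Proof.
move=> HS; split.
- by rewrite lin0; apply: submod0.
- by move=> x y Hx Hy; rewrite linD; apply: submodD.
- by move=> c x Hx; rewrite linZ; apply: submodZ.
Qed.

Lemma scaleU (c : C) (k : K) : c *: << k >> = << c *g k >> :> {malg C[K]}.
Proof.
apply/malgP => k'; rewrite mcoeffZ !mcoeffU.
by case: (k == k'); rewrite /= ?mulr1 ?mulr0.
Qed.

End Lin.

Lemma lin_id (C : comNzRingType) (K : choiceType) (f : {malg C[K]}) :
  lin (fun k => << k >> : {malg C[K]}) f = f.
Proof.
rewrite {2}(monalgE f) /lin; apply: eq_bigr => u _; exact: scaleU.
Qed.

Lemma lin_comp (C : comNzRingType) (K K2 : choiceType) (V : lmodType C)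
  (h2 : K2 -> V) (h1 : K -> {malg C[K2]}) f :
  lin h2 (lin h1 f) = lin (fun k => lin h2 (h1 k)) f.
Proof.
rewrite [lin h1 f]/lin lin_sum [RHS]/lin; apply: eq_bigr => u _; by rewrite linZ.
Qed.

Fixpoint allP (T : Type) (P : T -> Prop) (s : seq T) : Prop :=
  if s is x :: s' then P x /\ allP P s' else True.

Lemma allP_cat (T : Type) (P : T -> Prop) s1 s2 : allP P s1 -> allP P s2 -> allP P (s1 ++ s2).
Proof. by elim: s1 => //= x s IH [H1 H2] H3; split => //; apply: IH. Qed.

Lemma allP_map (T U : Type) (P : T -> Prop) (P' : U -> Prop) (f : T -> U) s :
  allP P s -> (forall x, P x -> P' (f x)) -> allP P' (map f s).
Proof. by move=> H Hf; elim: s H => //= x s IH [H1 H2]; split; [apply: Hf|apply: IH]. Qed.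

Lemma allP_mapW (T U : Type) (P' : U -> Prop) (f : T -> U) s :
  (forall x, P' (f x)) -> allP P' (map f s).
Proof. by move=> Hf; elim: s => //= x s IH; split. Qed.

Section Shuf.
Context (C : comNzRingType) (A : comAlgType C) (lam : C).

Fixpoint hasQ (Q : A -> Prop) (s : seq A) : Prop :=
  if s is x :: s' then Q x \/ hasQ Q s' else False.

Lemma hasQ_impl (Q Q' : A -> Prop) s : (forall x, Q x -> Q' x) -> hasQ Q s -> hasQ Q' s.
Proof. by move=> H; elim: s => //= x s IH [Hx|Hs]; [left; apply: H|right; apply: IH]. Qed.

Lemma mshE (x : A) xs y ys : mshuffle lam (x :: xs) (y :: ys) =
  [seq (p.1, x :: p.2) | p <- mshuffle lam xs (y :: ys)] ++
  [seq (p.1, y :: p.2) | p <- mshuffle lam (x :: xs) ys] ++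
  [seq (lam * p.1, (x * y) :: p.2) | p <- mshuffle lam xs ys].
Proof. by []. Qed.

Lemma msh0l (ys : seq A) : mshuffle lam [::] ys = [:: (1, ys)].
Proof. by case: ys. Qed.

Lemma msh0r (x : A) xs : mshuffle lam (x :: xs) [::] = [:: (1, x :: xs)].
Proof. by []. Qed.

Lemma in_cat3 (T : Type) (p : T) s1 s2 s3 :
  List.In p (s1 ++ s2 ++ s3) -> [\/ List.In p s1, List.In p s2 | List.In p s3].
Proof.
move/List.in_app_iff => [H|/List.in_app_iff [H|H]]; by [constructor 1|constructor 2|constructor 3].
Qed.

Lemma msh_has (Q : A -> Prop) : (lam = 0 \/ forall a b, Q b -> Q (a * b)) ->
  forall xs ys p, List.In p (mshuffle lam xs ys) -> (hasQ Q xs \/ hasQ Q ys) ->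
  p.1 = 0 \/ hasQ Q p.2.
Proof.
move=> Hc; elim=> [|x xs IHx] ys.
  by rewrite msh0l => p /= [<-|[]] [[]|H]; right.
elim: ys => [|y ys IHy].
  by rewrite msh0r => p /= [<-|[]] [H|[]]; right.
move=> p; rewrite mshE => H.
have [H1|H1|H1] := in_cat3 H; clear H; have [q [<- Hq]] := proj1 (List.in_map_iff _ _ _) H1 => /=.
- move=> [[Qx|Hxs]|Hys]; first by right; left.
  + by case: (IHx _ q Hq (or_introl Hxs)) => H; [left|right; right].
  + by case: (IHx _ q Hq (or_intror Hys)) => H; [left|right; right].
- move=> [Hxs|[Qy|Hys]].
  + by case: (IHy q Hq (or_introl Hxs)) => H; [left|right; right].
  + by right; left.
  + by case: (IHy q Hq (or_intror Hys)) => H; [left|right; right].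
- move=> [[Qx|Hxs]|[Qy|Hys]].
  + case: Hc => [->|Hc]; first by left; rewrite mul0r.
    by right; left; rewrite mulrC; apply: Hc.
  + by case: (IHx _ q Hq (or_introl Hxs)) => H; [left; rewrite H mulr0|right; right].
  + case: Hc => [->|Hc]; first by left; rewrite mul0r.
    by right; left; apply: Hc.
  + by case: (IHx _ q Hq (or_intror Hys)) => H; [left; rewrite H mulr0|right; right].
Qed.

Definition slot (F : A -> seq A) := exists pre y suf, forall x, F x = pre ++ (x * y) :: suf.

Lemma slot_cons z F : slot F -> slot (fun x => z :: F x).
Proof. by move=> [pre [y [suf H]]]; exists (z :: pre), y, suf => x; rewrite H. Qed.

Lemma slot_base pre y suf : slot (fun x => pre ++ (x * y) :: suf).
Proof. by exists pre, y, suf. Qed.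

Lemma slot_1 pre suf : slot (fun x => pre ++ x :: suf).
Proof. by exists pre, 1, suf => x; rewrite mulr1. Qed.

Definition tmpl (L : seq (C * (A -> seq A))) (x : A) := [seq (l.1, l.2 x) | l <- L].

Lemma tmpl_cat L1 L2 x : tmpl (L1 ++ L2) x = tmpl L1 x ++ tmpl L2 x.
Proof. by rewrite /tmpl map_cat. Qed.

Lemma tmpl_map (g : C -> C) z L (s : seq (C * seq A)) x : s = tmpl L x ->
  [seq (g p.1, z :: p.2) | p <- s] = tmpl [seq (g l.1, fun x => z :: l.2 x) | l <- L] x.
Proof. by move=> ->; rewrite /tmpl -!map_comp. Qed.

Lemma msh_slot_l pre suf ys : exists L, allP (fun l => slot l.2) L /\
  forall x, mshuffle lam (pre ++ x :: suf) ys = tmpl L x.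
Proof.
elim: pre suf ys => [|z pre IHp] suf ys.
  elim: ys => [|y ys [L [HL E]]].
    by exists [:: (1, fun x => x :: suf)]; split => //=; split => //; apply: (slot_1 [::]).
  exists ([seq (q.1, fun x => x :: q.2) | q <- mshuffle lam suf (y :: ys)] ++
          [seq (l.1, fun x => y :: l.2 x) | l <- L] ++
          [seq (lam * q.1, fun x => (x * y) :: q.2) | q <- mshuffle lam suf ys]).
  split.
    apply: allP_cat; first by apply: allP_mapW => q; apply: (slot_1 [::]).
    apply: allP_cat; first by apply: allP_map HL _ => l; apply: slot_cons.
    by apply: allP_mapW => q; apply: (slot_base [::]).
  move=> x; rewrite cat0s mshE !tmpl_cat; congr (_ ++ _ ++ _).
  - by rewrite /tmpl -map_comp.
  - by apply: (tmpl_map id); apply: E.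
  - by rewrite /tmpl -map_comp.
elim: ys => [|y ys [L [HL E]]].
  exists [:: (1, fun x => z :: pre ++ x :: suf)]; split => //=.
  by split => //; apply: (slot_1 (z :: pre)).
have [L1 [HL1 E1]] := IHp suf (y :: ys).
have [L3 [HL3 E3]] := IHp suf ys.
exists ([seq (l.1, fun x => z :: l.2 x) | l <- L1] ++
        [seq (l.1, fun x => y :: l.2 x) | l <- L] ++
        [seq (lam * l.1, fun x => (z * y) :: l.2 x) | l <- L3]).
split.
  apply: allP_cat; first by apply: allP_map HL1 _ => l; apply: slot_cons.
  apply: allP_cat; first by apply: allP_map HL _ => l; apply: slot_cons.
  by apply: allP_map HL3 _ => l; apply: slot_cons.
move=> x; rewrite cat_cons mshE !tmpl_cat; congr (_ ++ _ ++ _).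
- by apply: (tmpl_map id); apply: E1.
- by apply: (tmpl_map id); apply: E.
- by apply: (tmpl_map ( *%R lam)); apply: E3.
Qed.

Lemma msh_slot_r xs pre suf : exists L, allP (fun l => slot l.2) L /\
  forall x, mshuffle lam xs (pre ++ x :: suf) = tmpl L x.
Proof.
elim: xs pre suf => [|z xs IHx] pre suf.
  exists [:: (1, fun x => pre ++ x :: suf)]; split; first by split => //; apply: slot_1.
  by move=> x; rewrite msh0l.
elim: pre => [|y pre [L [HL E]]].
  have [L1 [HL1 E1]] := IHx [::] suf.
  exists ([seq (l.1, fun x => z :: l.2 x) | l <- L1] ++
          [seq (q.1, fun x => x :: q.2) | q <- mshuffle lam (z :: xs) suf] ++
          [seq (lam * q.1, fun x => (z * x) :: q.2) | q <- mshuffle lam xs suf]).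
  split.
    apply: allP_cat; first by apply: allP_map HL1 _ => l; apply: slot_cons.
    apply: allP_cat; first by apply: allP_mapW => q; apply: (slot_1 [::]).
    apply: allP_mapW => q /=; exists [::], z, q.2; move=> x /=.
    by congr (_ :: _); apply: mulrC.
  move=> x; rewrite cat0s mshE !tmpl_cat; congr (_ ++ _ ++ _).
  - by apply: (tmpl_map id); apply: E1.
  - by rewrite /tmpl -map_comp.
  - by rewrite /tmpl -map_comp.
have [L1 [HL1 E1]] := IHx (y :: pre) suf.
have [L3 [HL3 E3]] := IHx pre suf.
exists ([seq (l.1, fun x => z :: l.2 x) | l <- L1] ++
        [seq (l.1, fun x => y :: l.2 x) | l <- L] ++
        [seq (lam * l.1, fun x => (z * y) :: l.2 x) | l <- L3]).
split.
  apply: allP_cat; first by apply: allP_map HL1 _ => l; apply: slot_cons.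
  apply: allP_cat; first by apply: allP_map HL _ => l; apply: slot_cons.
  by apply: allP_map HL3 _ => l; apply: slot_cons.
move=> x; rewrite cat_cons mshE !tmpl_cat; congr (_ ++ _ ++ _).
- by apply: (tmpl_map id); apply: E1.
- by apply: (tmpl_map id); apply: E.
- by apply: (tmpl_map ( *%R lam)); apply: E3.
Qed.
End Shuf.

Lemma rearr3 (V : zmodType) (p s q t r w : V) :
  p + s - (q + t) - (r + w) = (p - q - r) + (s - t - w).
Proof. by rewrite opprD addrACA opprD [LHS]addrACA. Qed.

Lemma rearr2 (V : zmodType) (p s q t : V) : p + s - (q + t) = (p - q) + (s - t).
Proof. by rewrite opprD addrACA. Qed.

Lemma scalerCA' (C : comNzRingType) (V : lmodType C) (c d : C) (y : V) :
  c *: (d *: y) = d *: (c *: y).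
Proof. by rewrite !scalerA mulrC. Qed.

Lemma allP_impl (T : Type) (P P' : T -> Prop) s : allP P s -> (forall x, P x -> P' x) -> allP P' s.
Proof. by move=> H Hi; elim: s H => //= x s IH [H1 H2]; split; [apply: Hi|apply: IH]. Qed.

Lemma sum_gen3 (C : comNzRingType) (V : lmodType C) (S : V -> Prop) (T : Type)
  (L : seq (C * T)) (X Y Z : T -> V) : submod S ->
  allP (fun l => S (X l.2 - Y l.2 - Z l.2)) L ->
  S (\sum_(l <- L) l.1 *: X l.2 - \sum_(l <- L) l.1 *: Y l.2 - \sum_(l <- L) l.1 *: Z l.2).
Proof.
move=> HS; elim: L => [|l L IH] /=.
  by move=> _; rewrite !big_nil !subr0; apply: submod0.
move=> [Hl HL]; rewrite !big_cons rearr3 -!scalerBr.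
by apply: (submodD HS); [apply: (submodZ _ HS)|apply: IH].
Qed.

Lemma sum_gen2 (C : comNzRingType) (V : lmodType C) (S : V -> Prop) (T : Type)
  (L : seq (C * T)) (X Y : T -> V) (c : C) : submod S ->
  allP (fun l => S (X l.2 - c *: Y l.2)) L ->
  S (\sum_(l <- L) l.1 *: X l.2 - c *: \sum_(l <- L) l.1 *: Y l.2).
Proof.
move=> HS; elim: L => [|l L IH] /=.
  by move=> _; rewrite !big_nil scaler0 !subr0; apply: submod0.
move=> [Hl HL]; rewrite !big_cons scalerDr rearr2 scalerCA' -scalerBr.
by apply: (submodD HS); [apply: (submodZ _ HS)|apply: IH].
Qed.

Section Bax.
Context (C : comNzRingType) (A : comAlgType C) (lam : C).

Definition slotw (F : A -> tword A) := exists pre y suf, forall x, F x = wd (pre ++ (x * y) :: suf).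

Lemma wmul_slot_l (u sv : seq A) (v : tword A) : exists L : seq (C * (A -> tword A)),
  allP (fun l => slotw l.2) L /\
  forall x, wmul lam (wd (u ++ x :: sv)) v = \sum_(l <- L) l.1 *: << l.2 x >>.
Proof.
case: u => [|x0 u].
  exists [seq (p.1, fun x => (x * v.1, p.2)) | p <- mshuffle lam sv v.2]; split.
    by apply: allP_mapW => p; exists [::], v.1, p.2.
  by move=> x; rewrite /wmul big_map.
have [L0 [HL0 E]] := msh_slot_l lam u sv v.2.
exists [seq (l.1, fun x => (x0 * v.1, l.2 x)) | l <- L0]; split.
  apply: allP_map HL0 _ => l [pre [y [suf H]]].
  by exists (x0 * v.1 :: pre), y, suf => x /=; rewrite H.
by move=> x; rewrite /wmul /= E /tmpl !big_map.
Qed.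

Lemma wmul_slot_r (w : tword A) (u sv : seq A) : exists L : seq (C * (A -> tword A)),
  allP (fun l => slotw l.2) L /\
  forall x, wmul lam w (wd (u ++ x :: sv)) = \sum_(l <- L) l.1 *: << l.2 x >>.
Proof.
case: u => [|y0 u].
  exists [seq (p.1, fun x => (x * w.1, p.2)) | p <- mshuffle lam w.2 sv]; split.
    by apply: allP_mapW => p; exists [::], w.1, p.2.
  by move=> x; rewrite /wmul big_map; apply: eq_bigr => p _ /=; rewrite mulrC.
have [L0 [HL0 E]] := msh_slot_r lam w.2 u sv.
exists [seq (l.1, fun x => (w.1 * y0, l.2 x)) | l <- L0]; split.
  apply: allP_map HL0 _ => l [pre [y [suf H]]].
  by exists (w.1 * y0 :: pre), y, suf => x /=; rewrite H.
by move=> x; rewrite /wmul /= E /tmpl !big_map.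
Qed.

Variable J : Fsh A -> Prop.
Hypothesis HJ : submod J.
Hypothesis HJrel : forall f, tensor_rel f -> J f.

Lemma rel_slotw F (a b : A) (c : C) : slotw F ->
  J (<< F (a + b) >> - << F a >> - << F b >>) /\ J (<< F (c *: a) >> - c *: << F a >>).
Proof.
move=> [pre [y [suf H]]]; rewrite !H; split; apply: HJrel.
  by left; exists pre, suf, (a * y), (b * y); rewrite mulrDl.
by right; exists pre, suf, c, (a * y); rewrite scalerAl.
Qed.

Lemma sum_rel (L : seq (C * (A -> tword A))) (a b : A) (c : C) : allP (fun l => slotw l.2) L ->
  J (\sum_(l <- L) l.1 *: << l.2 (a + b) >> - \sum_(l <- L) l.1 *: << l.2 a >>
      - \sum_(l <- L) l.1 *: << l.2 b >>) /\
  J (\sum_(l <- L) l.1 *: << l.2 (c *: a) >> - c *: \sum_(l <- L) l.1 *: << l.2 a >>).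
Proof.
move=> HL; split.
  apply: (sum_gen3 (X := fun F => << F (a + b) >>) (Y := fun F => << F a >>) (Z := fun F => << F b >>) HJ).
  exact: (allP_impl HL (fun l Hl => proj1 (rel_slotw a b c Hl))).
apply: (sum_gen2 (X := fun F => << F (c *: a) >>) (Y := fun F => << F a >>) (c := c) HJ).
exact: (allP_impl HL (fun l Hl => proj2 (rel_slotw a b c Hl))).
Qed.
End Bax.

Section Baxter.
Context (C : comNzRingType) (A : comAlgType C) (lam : C) (G : tword A -> Prop).
Definition Gen (f : Fsh A) := tensor_rel f \/ exists w, G w /\ f = << w >>.
Definition JJ := Defs.span Gen.
Hypothesis HG1 : forall w v, G w -> forall p, List.In p (mshuffle lam w.2 v.2) ->
  p.1 = 0 \/ G (w.1 * v.1, p.2).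
Hypothesis HG2 : forall w v, G v -> forall p, List.In p (mshuffle lam w.2 v.2) ->
  p.1 = 0 \/ G (w.1 * v.1, p.2).
Hypothesis HGP : forall w, G w -> G (1, w.1 :: w.2).

Lemma JJsub : submod JJ.
Proof. exact: span_submod. Qed.

Lemma JJrel f : tensor_rel f -> JJ f.
Proof. by move=> H; apply: span_gen; left. Qed.

Lemma JJG w : G w -> JJ << w >>.
Proof. by move=> H; apply: span_gen; right; exists w. Qed.

Lemma wmulG w v : G w \/ G v -> JJ (wmul lam w v).
Proof.
move=> H; apply: (submod_sum JJsub) => p Hp.
have [->|Gp] : p.1 = 0 \/ G (w.1 * v.1, p.2).
    by case: H => [Gw|Gv]; [exact: (HG1 Gw Hp)|exact: (HG2 Gv Hp)].
  rewrite scale0r; exact: (submod0 JJsub).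
by apply: (submodZ _ JJsub); apply: JJG.
Qed.

Lemma shmulE1 (f g : Fsh A) : shmul lam f g = lin (fun u => lin (wmul lam u) g) f.
Proof.
rewrite /shmul /lin; apply: eq_bigr => u _; rewrite scaler_sumr.
by apply: eq_bigr => v _; rewrite scalerA.
Qed.

Lemma shmulE2 (f g : Fsh A) : shmul lam f g = lin (fun v => lin (fun u => wmul lam u v) f) g.
Proof.
rewrite /shmul exchange_big /lin; apply: eq_bigr => v _; rewrite scaler_sumr.
by apply: eq_bigr => u _; rewrite scalerA mulrC.
Qed.

Lemma rel_wmul_l (f : Fsh A) (v : tword A) : tensor_rel f -> JJ (lin (fun u => wmul lam u v) f).
Proof.
case=> [[u [sv [a [b ->]]]] | [u [sv [c [a ->]]]]];
  have [L [HL E]] := wmul_slot_l lam u sv v.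
  rewrite !linB !linU !E.
  exact: (proj1 (sum_rel JJsub JJrel a b 1 HL)).
rewrite linB linZ !linU !E.
exact: (proj2 (sum_rel JJsub JJrel a a c HL)).
Qed.

Lemma rel_wmul_r (w : tword A) (f : Fsh A) : tensor_rel f -> JJ (lin (wmul lam w) f).
Proof.
case=> [[u [sv [a [b ->]]]] | [u [sv [c [a ->]]]]];
  have [L [HL E]] := wmul_slot_r lam w u sv.
  rewrite !linB !linU !E.
  exact: (proj1 (sum_rel JJsub JJrel a b 1 HL)).
rewrite linB linZ !linU !E.
exact: (proj2 (sum_rel JJsub JJrel a a c HL)).
Qed.

Lemma JJmul_l (f g : Fsh A) : JJ f -> JJ (shmul lam f g).
Proof.
move=> Hf; rewrite shmulE1; move: f Hf.
apply: (span_min (S := fun f => JJ (lin (fun u => lin (wmul lam u) g) f))).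
  exact: (submod_pre _ JJsub).
move=> f [Hr|[w [Gw ->]]].
  rewrite -shmulE1 shmulE2; apply: (submod_lin _ JJsub) => v; exact: rel_wmul_l.
rewrite linU; apply: (submod_lin _ JJsub) => v; by apply: wmulG; left.
Qed.

Lemma JJmul_r (f g : Fsh A) : JJ f -> JJ (shmul lam g f).
Proof.
move=> Hf; rewrite shmulE2; move: f Hf.
apply: (span_min (S := fun f => JJ (lin (fun v => lin (fun u => wmul lam u v) g) f))).
  exact: (submod_pre _ JJsub).
move=> f [Hr|[w [Gw ->]]].
  rewrite -shmulE2 shmulE1; apply: (submod_lin _ JJsub) => u; exact: rel_wmul_r.
rewrite linU; apply: (submod_lin _ JJsub) => u; by apply: wmulG; right.
Qed.

Lemma shift_wd (u : seq A) x sv :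
  ((1 : A), (wd (u ++ x :: sv)).1 :: (wd (u ++ x :: sv)).2) = wd ((1 :: u) ++ x :: sv).
Proof. by case: u. Qed.

Lemma JJshP (f : Fsh A) : JJ f -> JJ (shP f).
Proof.
change (JJ f -> JJ (lin (fun u : tword A => << ((1 : A), u.1 :: u.2) >> : Fsh A) f)).
move: f; apply: (span_min (S := fun f => JJ (lin (fun u : tword A => << ((1 : A), u.1 :: u.2) >> : Fsh A) f))).
  exact: (submod_pre _ JJsub).
move=> f [[[u [sv [a [b ->]]]] | [u [sv [c [a ->]]]]]|[w [Gw ->]]].
- rewrite !linB !linU !shift_wd; apply: JJrel; left; by exists (1 :: u), sv, a, b.
- rewrite linB linZ !linU !shift_wd; apply: JJrel; right; by exists (1 :: u), sv, c, a.
- by rewrite linU; apply: JJG; apply: HGP.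
Qed.

Lemma JJbax : baxter_ideal lam JJ.
Proof.
split.
- exact: JJsub.
- exact: JJrel.
- by move=> f g Hf; split; [apply: JJmul_l|apply: JJmul_r].
- exact: JJshP.
Qed.
End Baxter.

Section Part2.
Context (C : comNzRingType) (A : comAlgType C).

Definition GI (I : A -> Prop) (w : tword A) := I w.1 \/ hasQ I w.2.

Lemma ideal_submod (I : A -> Prop) : ring_ideal I -> submod I.
Proof.
move=> [H0 HD HM]; split => // c x Hx.
by rewrite -[x]mul1r scalerAl; apply: HM.
Qed.

Section Hyps.
Variables (lam : C) (I : A -> Prop).
Hypothesis HI : ring_ideal I.

Lemma GI1 w v : GI I w -> forall p, List.In p (mshuffle lam w.2 v.2) ->
  p.1 = 0 \/ GI I (w.1 * v.1, p.2).
Proof.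
case: HI => _ _ HM [Hw|Hw] p Hp.
  by right; left => /=; rewrite mulrC; apply: HM.
have Hc : lam = 0 \/ (forall a b, I b -> I (a * b)) by right.
by case: (msh_has Hc Hp (or_introl Hw)) => H; [left|right; right].
Qed.

Lemma GI2 w v : GI I v -> forall p, List.In p (mshuffle lam w.2 v.2) ->
  p.1 = 0 \/ GI I (w.1 * v.1, p.2).
Proof.
case: HI => _ _ HM [Hv|Hv] p Hp.
  by right; left => /=; apply: HM.
have Hc : lam = 0 \/ (forall a b, I b -> I (a * b)) by right.
by case: (msh_has Hc Hp (or_intror Hv)) => H; [left|right; right].
Qed.

Lemma GIP w : GI I w -> GI I (1, w.1 :: w.2).
Proof. by move=> H; right. Qed.
End Hyps.

Definition phi0 (u : tword A) : A := if u.2 is [::] then u.1 else 0.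

Lemma phi0_wd (u sv : seq A) : exists d : bool, forall x, phi0 (wd (u ++ x :: sv)) = if d then x else 0.
Proof.
case: u => [|x0 u]; first by case: sv => [|y sv]; [exists true|exists false].
by exists false => x; case: u.
Qed.

Lemma phi_J (I : A -> Prop) (f : Fsh A) : ring_ideal I -> JJ (GI I) f -> I (lin phi0 f).
Proof.
move=> HI; have HS := ideal_submod HI; move: f.
apply: (span_min (S := fun f => I (lin phi0 f))); first exact: (submod_pre _ HS).
move=> f [[[u [sv [a [b ->]]]] | [u [sv [c [a ->]]]]]|[w [Gw ->]]].
- rewrite !linB !linU; have [[] E] := phi0_wd u sv; rewrite !E.
    by rewrite (addrC a b) addrK subrr; apply: (submod0 HS).
  by rewrite !subr0; apply: (submod0 HS).
- rewrite linB linZ !linU; have [[] E] := phi0_wd u sv; rewrite !E.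
    by rewrite subrr; apply: (submod0 HS).
  by rewrite scaler0 subr0; apply: (submod0 HS).
- rewrite linU; case: w Gw => w1 [|y s] [H|H] //=; by apply: (submod0 HS).
Qed.

Lemma part2 (lam : C) : acc (@baxter_ideal C A lam) -> noetherian A.
Proof.
move=> Hacc I HI Hmono.
have Hmono' : forall n k x, I n x -> I (n + k)%N x.
  move=> n k x; elim: k => [|k IH]; rewrite ?addn0 // addnS => H; apply: Hmono; exact: IH.
have Hm : forall n f, JJ (GI (I n)) f -> JJ (GI (I n.+1)) f.
  move=> n; apply: (span_min (S := JJ (GI (I n.+1)))); first exact: JJsub.
  move=> f [Hr|[w [Gw ->]]]; first exact: JJrel.
  apply: JJG; case: Gw => H; [left; exact: Hmono|right; exact: (hasQ_impl (Hmono n) H)].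
have [N HN] := Hacc (fun n => JJ (GI (I n)))
  (fun n => JJbax (GI1 (HI n)) (GI2 (HI n)) (@GIP (I n))) Hm.
exists N => m Hnm; apply: functional_extensionality => x.
apply: propositional_extensionality; split => Hx.
  have : JJ (GI (I m)) << (x, [::]) >> by apply: JJG; left.
  by rewrite HN // => /(phi_J (HI N)); rewrite linU.
by rewrite -(subnKC Hnm); apply: Hmono'.
Qed.
End Part2.

Lemma eq_lin (C : comNzRingType) (K : choiceType) (V : lmodType C) (h h' : K -> V) f :
  h =1 h' -> lin h f = lin h' f.
Proof. by move=> E; apply: eq_bigr => u _; rewrite E. Qed.

Section Part1.
Context (C : comNzRingType) (A : comAlgType C).

Definition Mt (S : Ft2 A -> Prop) (b : A) := forall a, S << (a, b) >>.
Definition GM (S : Ft2 A -> Prop) (w : tword A) := hasQ (Mt S) w.2.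

Lemma GM1 S w v : GM S w -> forall p, List.In p (mshuffle 0 w.2 v.2) ->
  p.1 = 0 \/ GM S (w.1 * v.1, p.2).
Proof.
move=> Hw p Hp.
have Hc : (0 : C) = 0 \/ (forall a b, Mt S b -> Mt S (a * b)) by left.
exact: (msh_has Hc Hp (or_introl Hw)).
Qed.

Lemma GM2 S w v : GM S v -> forall p, List.In p (mshuffle 0 w.2 v.2) ->
  p.1 = 0 \/ GM S (w.1 * v.1, p.2).
Proof.
move=> Hv p Hp.
have Hc : (0 : C) = 0 \/ (forall a b, Mt S b -> Mt S (a * b)) by left.
exact: (msh_has Hc Hp (or_intror Hv)).
Qed.

Lemma GMP S w : GM S w -> GM S (1, w.1 :: w.2).
Proof. by move=> H; right. Qed.

Definition psi0 (u : tword A) : Ft2 A := if u.2 is [:: b] then << (u.1, b) >> else 0.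
Definition iota0 (ab : A * A) : Fsh A := << (ab.1, [:: ab.2]) >>.

Lemma psi_iota (f : Ft2 A) : lin psi0 (lin iota0 f) = f.
Proof.
rewrite lin_comp -[RHS]lin_id; apply: eq_lin => -[a b].
by rewrite /iota0 linU.
Qed.

Lemma psi0_wd (u sv : seq A) :
  (exists b0, forall x, psi0 (wd (u ++ x :: sv)) = << (x, b0) >>) \/
  (exists a0, forall x, psi0 (wd (u ++ x :: sv)) = << (a0, x) >>) \/
  (forall x, psi0 (wd (u ++ x :: sv)) = 0).
Proof.
case: u => [|x0 [|x1 u]].
- case: sv => [|b0 [|b1 sv]]; [by right; right|by left; exists b0|by right; right].
- case: sv => [|b0 sv]; [by right; left; exists x0|by right; right].
- by right; right => x; case: u.
Qed.

Lemma psi_J (S : Ft2 A -> Prop) M (HS : S = tensorAM M) (f : Fsh A) :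
  JJ (GM S) f -> S (lin psi0 f).
Proof.
have Ssub : submod S by rewrite HS; apply: span_submod.
have Srel : forall g, tensor2_rel g -> S g by move=> g Hg; rewrite HS; apply: span_gen; left.
move: f; apply: (span_min (S := fun f => S (lin psi0 f))); first exact: (submod_pre _ Ssub).
move=> f [[[u [sv [a [b ->]]]] | [u [sv [c [a ->]]]]]|[w [Gw ->]]].
- rewrite !linB !linU.
  case: (psi0_wd u sv) => [[b0 E]|[[a0 E]|E]]; rewrite !E.
  + by apply: Srel; left; exists a, b, b0.
  + by apply: Srel; right; left; exists a0, a, b.
  + by rewrite !subr0; apply: (submod0 Ssub).
- rewrite linB linZ !linU.
  case: (psi0_wd u sv) => [[b0 E]|[[a0 E]|E]]; rewrite !E.
  + by apply: Srel; right; right; left; exists c, a, b0.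
  + by apply: Srel; right; right; right; exists c, a0, a.
  + by rewrite scaler0 subr0; apply: (submod0 Ssub).
- rewrite linU; case: w Gw => w1 [|b [|b' s]] //=.
  + by move=> [H|[]]; apply: H.
  + by move=> _; apply: (submod0 Ssub).
Qed.

Lemma iota_S (S : Ft2 A -> Prop) M (HS : S = tensorAM M) (f : Ft2 A) :
  S f -> JJ (GM S) (lin iota0 f).
Proof.
move=> Hf; have : tensorAM M f by rewrite -HS.
clear Hf; move: f.
apply: (span_min (S := fun f => JJ (GM S) (lin iota0 f))); first exact: (submod_pre _ (JJsub _)).
move=> f [Hr|[a [b [Mb ->]]]].
  case: Hr => [[a [a' [b ->]]] | [[a [b [b' ->]]] | [[c [a [b ->]]] | [c [a [b ->]]]]]];
    rewrite !linB ?linZ !linU; apply: JJrel.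
  - by left; exists [::], [:: b], a, a'.
  - by left; exists [:: a], [::], b, b'.
  - by right; exists [::], [:: b], c, a.
  - by right; exists [:: a], [::], c, b.
rewrite linU; apply: JJG; left => a' /=; rewrite HS.
by apply: span_gen; right; exists a', b.
Qed.

Lemma part1 : acc (@baxter_ideal C A 0) -> acc (@calM C A).
Proof.
move=> Hacc S HS Hmono.
have Hsub : forall n, exists M, S n = tensorAM M by move=> n; case: (HS n) => M [_ E]; exists M.
have Hm : forall n f, JJ (GM (S n)) f -> JJ (GM (S n.+1)) f.
  move=> n; apply: (span_min (S := JJ (GM (S n.+1)))); first exact: JJsub.
  move=> f [Hr|[w [Gw ->]]]; first exact: JJrel.
  apply: JJG; apply: (hasQ_impl _ Gw) => b Hb a; apply: Hmono; exact: Hb.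
have [N HN] := Hacc (fun n => JJ (GM (S n)))
  (fun n => JJbax (@GM1 (S n)) (@GM2 (S n)) (@GMP (S n))) Hm.
exists N => m Hnm; apply: functional_extensionality => f.
have [M HM] := Hsub m; have [M' HM'] := Hsub N.
apply: propositional_extensionality; split => Hf.
  have := iota_S HM Hf; rewrite HN // => /(psi_J HM').
  by rewrite psi_iota.
have := iota_S HM' Hf; rewrite -(HN m Hnm) => /(psi_J HM).
by rewrite psi_iota.
Qed.
End Part1.

Theorem theorem4p4 (C : comNzRingType) (A : comAlgType C) :
  (~ acc (@calM C A) -> ~ acc (@baxter_ideal C A 0)) /\
  (~ noetherian A -> forall lam : C, ~ acc (@baxter_ideal C A lam)).
Proof.
split.
  by move=> H1 H2; apply: H1; apply: part1.
by move=> H1 lam H2; apply: H1; apply: (part2 H2).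
Qed.
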